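(* Let $T$ be a ranked monad on $\mathbf{Set}$. For each set $A$ and $t\in TA$ there is a locale map $[\![t]\!]\colon\mathrm{LB}_0T\to A\cdot\mathrm{LB}_0T$ determined by $[\![t]\!]^{-1}\langle a_0\mapsto[t_0]\rangle=[t\mapsto a_0]\wedge[t\gg t_0]$ for $a_0\in A$ and $t_0\in T2$; these make $\mathrm{LB}_0T$ a comodel of $T$ in $\mathbf{Loc}$, and this comodel is the terminal object of the category $\mathrm{Comod}_T(\mathbf{Loc})$ of $T$-comodels in $\mathbf{Loc}$.
   Context: A monad $T$ on $\mathbf{Set}$: sets $TA$, $\mathrm{return}\,a\in TA$, $\mathbin{\gg\!=}\colon TA\times(TB)^A\to TB$ with the monad laws; $t\gg s:=t\mathbin{\gg\!=}\lambda a.s$. Ranked: for some regular $\kappa$ every $t\in TA$ is $t'\mathbin{\gg\!=}\lambda i.\mathrm{return}\,f(i)$ with $t'\in TI$, $|I|<\kappa$. $2=\{0,1\}$. Locales: $\mathbf{Loc}$ is the opposite of the category of frames; $\mathcal{O}(L)$ the frame of $L$, $f^{-1}$ the frame map of a locale map $f$. The copower $A\cdot L$ (the $A$-fold coproduct in $\mathbf{Loc}$) has frame $\mathcal{O}(L)^A$, $\langle a\mapsto u\rangle$ denoting the element equal to $u$ at $a$ and $\bot$ elsewhere; $\upsilon_a\colon L\to A\cdot L$ are the injections. Comodels: a $T$-comodel in a category with copowers is an object $W$ with maps $[\![t]\!]\colon W\to A\cdot W$ for each $t\in TA$, such that $[\![\mathrm{return}\,a]\!]=\upsilon_a$ and $[\![t\mathbin{\gg\!=}u]\!]=[\![u]\!]\circ[\![t]\!]$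 where for $u\colon A\to TB$, $[\![u]\!]:=[[\![u(a)]\!]]_{a\in A}\colon A\cdot W\to B\cdot W$. A comodel map $h\colon W\to W'$ satisfies $[\![t]\!]\circ h=(A\cdot h)\circ[\![t]\!]$ for all $t\in TA$. The behaviour locale $\mathrm{LB}_0T$: frame presented by generators $[b]$ ($b\in T2$) subject to, for all sets $A,B$, $t\in TA$, $u\colon A\to TB$, $a\ne a'\in A$, $b\in B$: $[t\mapsto a]\wedge[t\mapsto a']=\bot$, $[t\gg\mathrm{return}\,a\mapsto a]=\top$, $[t\mathbin{\gg\!=}u\mapsto b]=\bigvee_a[t\mapsto a]\wedge[t\gg u(a)\mapsto b]$, where $[t\mapsto a]:=[t\mathbin{\gg\!=}\lambda a'.\mathrm{return}(\delta_a(a'))]$ and $\delta_a(a')=1$ iff $a'=a$, $0$ otherwise. *)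

(* Defs.v *)
From Stdlib Require Import ClassicalEpsilon FunctionalExtensionality.

Set Implicit Arguments.

Record Monad := {
  MT :> Type -> Type;
  ret : forall A : Type, A -> MT A;
  bind : forall A B : Type, MT A -> (A -> MT B) -> MT B;
  bind_ret_l : forall A B (a : A) (f : A -> MT B), bind (ret a) f = f a;
  bind_ret_r : forall A (t : MT A), bind t (@ret A) = t;
  bind_assoc : forall A B C (t : MT A) (f : A -> MT B) (g : B -> MT C),
      bind (bind t f) g = bind t (fun a => bind (f a) g)
}.
Arguments ret {m A} _.
Arguments bind {m A B} _ _.

Definition seq_ (T : Monad) A B (t : T A) (s : T B) : T B := bind t (fun _ => s).
Arguments seq_ {T A B} t s.

Definition card_le (X Y : Type) : Prop :=
  exists f : X -> Y, forall x x', f x = f x' -> x = x'.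
Definition card_lt (X Y : Type) : Prop := card_le X Y /\ ~ card_le Y X.
Definition infinite_type (K : Type) : Prop := card_le nat K.
Definition regular (K : Type) : Prop :=
  infinite_type K /\
  forall (J : Type) (X : J -> Type),
    card_lt J K -> (forall j, card_lt (X j) K) -> card_lt {j : J & X j} K.

Definition ranked (T : Monad) : Prop :=
  exists K : Type, regular K /\
    forall (A : Type) (t : T A), exists (I : Type) (t' : T I) (f : I -> A),
      card_lt I K /\ t = bind t' (fun i => ret (f i)).

Record Frame := {
  fcar :> Type;
  fle : fcar -> fcar -> Prop;
  fle_refl : forall x, fle x x;
  fle_trans : forall x y z, fle x y -> fle y z -> fle x z;
  fle_antisym : forall x y, fle x y -> fle y x -> x = y;
  ftop : fcar;
  fmeet : fcar -> fcar -> fcar;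
  fjoin : (fcar -> Prop) -> fcar;
  ftop_max : forall x, fle x ftop;
  fmeet_lb1 : forall x y, fle (fmeet x y) x;
  fmeet_lb2 : forall x y, fle (fmeet x y) y;
  fmeet_glb : forall x y z, fle z x -> fle z y -> fle z (fmeet x y);
  fjoin_ub : forall (S : fcar -> Prop) x, S x -> fle x (fjoin S);
  fjoin_lub : forall (S : fcar -> Prop) y, (forall x, S x -> fle x y) -> fle (fjoin S) y;
  fdistr : forall a (S : fcar -> Prop),
      fmeet a (fjoin S) = fjoin (fun y => exists x, S x /\ y = fmeet a x)
}.
Arguments fle {f} _ _.
Arguments ftop {f}.
Arguments fmeet {f} _ _.
Arguments fjoin {f} _.

Definition fbot (F : Frame) : F := fjoin (fun _ => False).

Lemma fjoin_ext (F : Frame) (S S' : F -> Prop) :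
  (forall x, S x <-> S' x) -> fjoin S = fjoin S'.
Proof.
  intros H; apply fle_antisym; apply fjoin_lub; intros x Hx;
  apply fjoin_ub; apply H; exact Hx.
Qed.

Record FrameHom (F G : Frame) := {
  fh :> F -> G;
  fh_top : fh ftop = ftop;
  fh_meet : forall x y, fh (fmeet x y) = fmeet (fh x) (fh y);
  fh_join : forall S : F -> Prop,
      fh (fjoin S) = fjoin (fun y => exists x, S x /\ y = fh x)
}.

Definition fh_eq F G (f g : FrameHom F G) : Prop := forall x, f x = g x.

Program Definition fh_comp F G H (g : FrameHom G H) (f : FrameHom F G) : FrameHom F H :=
  {| fh := fun x => g (f x) |}.
Next Obligation. rewrite !fh_top; reflexivity. Qed.
Next Obligation. rewrite !fh_meet; reflexivity. Qed.
Next Obligation.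
  rewrite fh_join, fh_join. apply fjoin_ext; intros y; split.
  - intros [z [[x [Hx ->]] ->]]; eauto.
  - intros [x [Hx ->]]; eauto.
Qed.

(* A locale is given by its frame O(L); a locale map L -> M is a frame
   homomorphism O(M) -> O(L) (its inverse-image map f^{-1}). *)
Definition LocMap (L M : Frame) := FrameHom M L.
Definition loc_inv L M (f : LocMap L M) : M -> L := fun x => f x.
Arguments loc_inv {L M} f _.
Definition loc_eq L M (f g : LocMap L M) : Prop := fh_eq f g.
Definition loc_comp L M N (g : LocMap M N) (f : LocMap L M) : LocMap L N :=
  fh_comp f g.

Program Definition copow (A : Type) (L : Frame) : Frame :=
  {| fcar := A -> L;
     fle := fun f g => forall a, fle (f a) (g a);
     ftop := fun _ => ftop;
     fmeet := fun f g a => fmeet (f a) (g a);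
     fjoin := fun S a => fjoin (fun y => exists f, S f /\ y = f a) |}.
Next Obligation. apply fle_refl. Qed.
Next Obligation. eapply fle_trans; eauto. Qed.
Next Obligation. apply functional_extensionality; intro a; apply fle_antisym; auto. Qed.
Next Obligation. apply ftop_max. Qed.
Next Obligation. apply fmeet_lb1. Qed.
Next Obligation. apply fmeet_lb2. Qed.
Next Obligation. apply fmeet_glb; auto. Qed.
Next Obligation. apply fjoin_ub; eauto. Qed.
Next Obligation. apply fjoin_lub; intros x [f [Hf ->]]; auto. Qed.
Next Obligation.
  apply functional_extensionality; intro i; rewrite fdistr.
  apply fjoin_ext; intros y; split.
  - intros [x [[f [Hf ->]] ->]]. exists (fun i => fmeet (a i) (f i)); eauto.
  - intros [g [[f [Hf ->]] ->]]. eauto.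
Qed.

(* <a |-> u> : equal to u at a and bottom elsewhere *)
Definition pt (A : Type) (L : Frame) (a : A) (u : L) : copow A L :=
  fun a' => fjoin (fun x => a' = a /\ x = u).
Arguments pt {A L} a u.

Program Definition upsilon (A : Type) (L : Frame) (a : A) : LocMap L (copow A L) :=
  {| fh := fun (f : copow A L) => f a |}.

Program Definition copair (A B : Type) (W : Frame) (f : A -> LocMap W (copow B W))
  : LocMap (copow A W) (copow B W) :=
  {| fh := fun (g : copow B W) => (fun a => f a g) : copow A W |}.
Next Obligation. apply functional_extensionality; intro a; apply (fh_top (f a)). Qed.
Next Obligation. apply functional_extensionality; intro a; apply (fh_meet (f a)). Qed.
Next Obligation.
  apply functional_extensionality; intro a;
  refine (eq_trans (fh_join (f a) S) _).
  apply fjoin_ext; intros y; split.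
  - intros [x [Hx ->]]. exists (fun a => f a x); eauto.
  - intros [g [[x [Hx ->]] ->]]; eauto.
Qed.

Program Definition copow_map (A : Type) (W W' : Frame) (h : LocMap W W')
  : LocMap (copow A W) (copow A W') :=
  {| fh := fun (g : copow A W') => (fun a => h (g a)) : copow A W |}.
Next Obligation. apply functional_extensionality; intro a; apply fh_top. Qed.
Next Obligation. apply functional_extensionality; intro a; apply fh_meet. Qed.
Next Obligation.
  apply functional_extensionality; intro a;
  refine (eq_trans (fh_join h _) _).
  apply fjoin_ext; intros y; split.
  - intros [x [[g [Hg ->]] ->]]. exists (fun a => h (g a)); eauto.
  - intros [g [[x [Hx ->]] ->]]; eauto.
Qed.

Definition ComodelStr (T : Monad) (W : Frame) :=
  forall (A : Type) (t : T A), LocMap W (copow A W).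

Definition is_comodel (T : Monad) (W : Frame) (sem : ComodelStr T W) : Prop :=
  (forall (A : Type) (a : A), loc_eq (sem A (ret a)) (upsilon W a)) /\
  (forall (A B : Type) (t : T A) (u : A -> T B),
      loc_eq (sem B (bind t u))
             (loc_comp (copair (fun a => sem B (u a))) (sem A t))).

Definition is_comodel_map (T : Monad) (W W' : Frame)
  (semW : ComodelStr T W) (semW' : ComodelStr T W') (h : LocMap W W') : Prop :=
  forall (A : Type) (t : T A),
    loc_eq (loc_comp (semW' A t) h) (loc_comp (copow_map A h) (semW A t)).

Definition terminal_comodel (T : Monad) (L : Frame) (sem : ComodelStr T L) : Prop :=
  forall (W : Frame) (semW : ComodelStr T W), is_comodel semW ->
    (exists h : LocMap W L, is_comodel_map semW sem h) /\
    (forall h h' : LocMap W L, is_comodel_map semW sem h ->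
        is_comodel_map semW sem h' -> loc_eq h h').

Definition delta (A : Type) (a a' : A) : bool :=
  if excluded_middle_informative (a' = a) then true else false.

Definition maps_to (T : Monad) (F : Frame) (g : T bool -> F) A (t : T A) (a : A) : F :=
  g (bind t (fun a' => ret (delta a a'))).
Arguments maps_to {T F} g {A} t a.

Definition LB0_relations (T : Monad) (F : Frame) (g : T bool -> F) : Prop :=
  (forall (A : Type) (t : T A) (a a' : A), a <> a' ->
      fmeet (maps_to g t a) (maps_to g t a') = fbot F) /\
  (forall (A : Type) (t : T A) (a : A),
      maps_to g (seq_ t (ret a)) a = ftop) /\
  (forall (A B : Type) (t : T A) (u : A -> T B) (b : B),
      maps_to g (bind t u) b =
      fjoin (fun y => exists a : A, y = fmeet (maps_to g t a) (maps_to g (seq_ t (u a)) b))).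

Arguments LB0_relations {T F} g.

(* (L, gen) is the frame presented by generators [b] (b in T 2) and the
   relations above, i.e. it has the universal property of the presentation. *)
Definition presents_LB0 (T : Monad) (L : Frame) (gen : T bool -> L) : Prop :=
  LB0_relations gen /\
  forall (F : Frame) (g : T bool -> F), LB0_relations g ->
    (exists h : FrameHom L F, forall b, h (gen b) = g b) /\
    (forall h h' : FrameHom L F, (forall b, h (gen b) = g b) ->
        (forall b, h' (gen b) = g b) -> fh_eq h h').

Arguments presents_LB0 {T L} gen.

(* Main.v *)
Require Import Defs.
From Stdlib Require Import ClassicalEpsilon FunctionalExtensionality PropExtensionality ProofIrrelevance Classical List.
Import ListNotations.
Set Implicit Arguments.

Section FrameLemmas.
Variable F : Frame.
Implicit Types x y z c : F.

Lemma meet_le_l x y z : fle x z -> fle (fmeet x y) z.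
Proof. intros; eapply fle_trans; [apply fmeet_lb1|]; auto. Qed.
Lemma meet_le_r x y z : fle y z -> fle (fmeet x y) z.
Proof. intros; eapply fle_trans; [apply fmeet_lb2|]; auto. Qed.
Lemma meet_comm x y : fmeet x y = fmeet y x.
Proof. apply fle_antisym; apply fmeet_glb; (apply fmeet_lb1 || apply fmeet_lb2). Qed.
Lemma meet_top_r x : fmeet x ftop = x.
Proof. apply fle_antisym. apply fmeet_lb1. apply fmeet_glb. apply fle_refl. apply ftop_max. Qed.
Lemma meet_top_l x : fmeet ftop x = x.
Proof. rewrite meet_comm; apply meet_top_r. Qed.
Lemma meet_assoc x y z : fmeet x (fmeet y z) = fmeet (fmeet x y) z.
Proof.
  apply fle_antisym; repeat apply fmeet_glb;
  repeat first [apply fle_refl | apply meet_le_l; solve [auto using fle_refl, meet_le_l, meet_le_r]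
               | apply meet_le_r; solve [auto using fle_refl, meet_le_l, meet_le_r]].
Qed.
Lemma le_meet_eq x y : fle x y -> fmeet x y = x.
Proof. intros; apply fle_antisym. apply fmeet_lb1. apply fmeet_glb; auto using fle_refl. Qed.
Lemma meet_eq_le x y : fmeet x y = x -> fle x y.
Proof. intros H; rewrite <- H; apply fmeet_lb2. Qed.
Lemma bot_le x : fle (fbot F) x.
Proof. unfold fbot; apply fjoin_lub; intros ? []. Qed.
Lemma le_bot_eq x : fle x (fbot F) -> x = fbot F.
Proof. intros; apply fle_antisym; auto using bot_le. Qed.
Lemma meet_bot_r x : fmeet x (fbot F) = fbot F.
Proof. apply le_bot_eq, fmeet_lb2. Qed.
Lemma meet_bot_l x : fmeet (fbot F) x = fbot F.
Proof. apply le_bot_eq, fmeet_lb1. Qed.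
Lemma meet_mono x y x' y' : fle x x' -> fle y y' -> fle (fmeet x y) (fmeet x' y').
Proof. intros; apply fmeet_glb; [apply meet_le_l|apply meet_le_r]; auto. Qed.
Lemma meet_join_le x (S : F -> Prop) c :
  (forall s, S s -> fle (fmeet x s) c) -> fle (fmeet x (fjoin S)) c.
Proof. intros H. rewrite fdistr. apply fjoin_lub. intros y [s [Hs ->]]. auto. Qed.
Lemma join_meet_le x (S : F -> Prop) c :
  (forall s, S s -> fle (fmeet s x) c) -> fle (fmeet (fjoin S) x) c.
Proof. intros H. rewrite meet_comm. apply meet_join_le. intros; rewrite meet_comm; auto. Qed.
Lemma le_join x (S : F -> Prop) y : S y -> fle x y -> fle x (fjoin S).
Proof. intros; eapply fle_trans; [|apply fjoin_ub]; eauto. Qed.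
Lemma join_single x : fjoin (fun y => y = x) = x.
Proof. apply fle_antisym. apply fjoin_lub; intros ? ->; apply fle_refl. apply fjoin_ub; auto. Qed.

Lemma disj_meet A (X Y Z : A -> F) :
  (forall a b, a <> b -> fmeet (X a) (X b) = fbot F) ->
  fmeet (fjoin (fun y => exists a, y = fmeet (X a) (Y a)))
        (fjoin (fun y => exists a, y = fmeet (X a) (Z a)))
  = fjoin (fun y => exists a, y = fmeet (X a) (fmeet (Y a) (Z a))).
Proof.
  intros Hd. apply fle_antisym.
  - apply meet_join_le. intros s2 [b ->]. apply join_meet_le. intros s1 [a ->].
    destruct (classic (a = b)) as [<-|Hne].
    + apply le_join with (fmeet (X a) (fmeet (Y a) (Z a))); [eauto|].
      apply fmeet_glb. apply meet_le_l, fmeet_lb1.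
      apply fmeet_glb. apply meet_le_l, fmeet_lb2. apply meet_le_r, fmeet_lb2.
    + eapply fle_trans; [|apply bot_le]. rewrite <- (Hd a b Hne).
      apply meet_mono; apply fmeet_lb1.
  - apply fjoin_lub. intros y [a ->]. apply fmeet_glb.
    + apply le_join with (fmeet (X a) (Y a)); [eauto|]. apply meet_mono. apply fle_refl. apply fmeet_lb1.
    + apply le_join with (fmeet (X a) (Z a)); [eauto|]. apply meet_mono. apply fle_refl. apply fmeet_lb2.
Qed.
End FrameLemmas.

Lemma fh_mono F G (h : FrameHom F G) x y : fle x y -> fle (h x) (h y).
Proof. intros H. apply meet_eq_le. rewrite <- fh_meet. rewrite le_meet_eq; auto. Qed.
Lemma fh_bot F G (h : FrameHom F G) : h (fbot F) = fbot G.
Proof. unfold fbot. rewrite fh_join. apply fjoin_ext. firstorder. Qed.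

Lemma pt_eq A (L : Frame) (a : A) (u : L) : pt a u a = u.
Proof. unfold pt. apply fle_antisym. apply fjoin_lub; intros x [_ ->]; apply fle_refl.
  apply fjoin_ub; auto. Qed.
Lemma pt_neq A (L : Frame) (a a' : A) (u : L) : a' <> a -> pt a u a' = fbot L.
Proof. intros H. unfold pt, fbot. apply fjoin_ext. intros x; split; [intros [e _]; contradiction|intros []]. Qed.
Lemma fh_pt A F G (h : FrameHom F G) (a a' : A) (u : F) : h (pt a u a') = pt a (h u) a'.
Proof. unfold pt. rewrite fh_join. apply fjoin_ext. intros y; split.
  - intros [x [[e ->] ->]]; auto.
  - intros [e ->]; eauto. Qed.

Lemma copow_ext A (L : Frame) (f g : copow A L) : (forall a, f a = g a) -> f = g.
Proof. intros; apply functional_extensionality; auto. Qed.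

Lemma copow_decomp A (L : Frame) (f : copow A L) :
  f = @fjoin (copow A L) (fun y => exists a, y = pt a (f a)).
Proof.
  apply copow_ext; intros a'. simpl. apply fle_antisym.
  - apply le_join with (pt a' (f a') a'). exists (pt a' (f a')). split; eauto.
    rewrite pt_eq; apply fle_refl.
  - apply fjoin_lub. intros y [g [[a ->] ->]].
    destruct (classic (a' = a)) as [->|Hne]. rewrite pt_eq; apply fle_refl.
    rewrite pt_neq; auto; apply bot_le.
Qed.

Lemma copow_bot A (L : Frame) : fbot (copow A L) = fun _ => fbot L.
Proof. apply copow_ext; intros a. simpl. unfold fbot. apply fjoin_ext. firstorder. Qed.
Section Down.
Variables (W : Frame) (c : W).
Definition dcar := {x : W | fle x c}.
Definition dle (x y : dcar) := fle (proj1_sig x) (proj1_sig y).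
Definition dtop : dcar := exist (fun x => fle x c) c (@fle_refl W c).
Definition dmeet (x y : dcar) : dcar :=
  exist _ (fmeet (proj1_sig x) (proj1_sig y)) (@meet_le_l W _ _ _ (proj2_sig x)).
Lemma djoin_pf (S : dcar -> Prop) : fle (fjoin (fun w => exists x, S x /\ w = proj1_sig x)) c.
Proof. apply fjoin_lub. intros w [x [_ ->]]. apply (proj2_sig x). Qed.
Definition djoin (S : dcar -> Prop) : dcar := exist (fun w => fle w c) _ (djoin_pf S).
Lemma dsig_eq (x y : dcar) : proj1_sig x = proj1_sig y -> x = y.
Proof. destruct x, y; simpl; intros ->; f_equal; apply proof_irrelevance. Qed.
Definition down : Frame.
Proof.
  refine {| fcar := dcar; fle := dle; ftop := dtop; fmeet := dmeet; fjoin := djoin |};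
  unfold dle; simpl.
  - intros; apply fle_refl.
  - intros; eapply fle_trans; eauto.
  - intros; apply dsig_eq, fle_antisym; auto.
  - intros x; apply (proj2_sig x).
  - intros; apply fmeet_lb1.
  - intros; apply fmeet_lb2.
  - intros; apply fmeet_glb; auto.
  - intros S x H; apply fjoin_ub; eauto.
  - intros S y H; apply fjoin_lub; intros w [x [Hx ->]]; auto.
  - intros a S; apply dsig_eq; simpl. rewrite fdistr. apply fjoin_ext. intros y; split.
    + intros [w [[x [Hx ->]] ->]]. exists (dmeet a x); split; eauto.
    + intros [y' [[x [Hx ->]] ->]]. simpl. eauto.
Defined.

Variables (F : Frame) (phi : F -> W) (Htop : phi ftop = c)
  (Hmeet : forall x y, phi (fmeet x y) = fmeet (phi x) (phi y))
  (Hjoin : forall S, phi (fjoin S) = fjoin (fun y => exists x, S x /\ y = phi x)).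
Lemma phi_le x : fle (phi x) c.
Proof. rewrite <- Htop, <- (@meet_top_r F x), Hmeet. apply fmeet_lb2. Qed.
Definition down_hom : FrameHom F down.
Proof.
  refine {| fh := fun x => (exist (fun w => fle w c) (phi x) (phi_le x) : down) |}.
  - apply dsig_eq; simpl; auto.
  - intros; apply dsig_eq; simpl; auto.
  - intros S; apply dsig_eq; simpl. rewrite Hjoin. apply fjoin_ext. intros y; split.
    + intros [x [Hx ->]]. eexists; split; [eexists; split; [eauto|reflexivity]|reflexivity].
    + intros [y' [[x [Hx ->]] ->]]. simpl; eauto.
Defined.
End Down.

Lemma hom_rel (T : Monad) F G (h : FrameHom F G) (g : T bool -> F) :
  LB0_relations g -> LB0_relations (fun b => h (g b)).
Proof.
  intros [R1 [R2 R3]]. unfold LB0_relations, maps_to in *. split; [|split].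
  - intros A t a a' Hne. rewrite <- fh_meet, R1, fh_bot; auto.
  - intros A t a. rewrite R2. apply fh_top.
  - intros A B t u b. rewrite R3, fh_join. apply fjoin_ext. intros y; split.
    + intros [x [[a ->] ->]]; exists a; rewrite fh_meet; reflexivity.
    + intros [a ->]. eexists; split; [exists a; reflexivity|rewrite fh_meet; reflexivity].
Qed.

Lemma delta_eq A (a : A) : delta a a = true.
Proof. unfold delta; destruct excluded_middle_informative; congruence. Qed.
Lemma delta_neq A (a a' : A) : a' <> a -> delta a a' = false.
Proof. unfold delta; destruct excluded_middle_informative; congruence. Qed.
Lemma delta_true_iff A (a a' : A) : delta a a' = true <-> a' = a.
Proof. unfold delta; destruct excluded_middle_informative; split; congruence. Qed.

Lemma seq_bind (T : Monad) A B C (t : T A) (s : T B) (f : B -> T C) :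
  seq_ t (bind s f) = bind (seq_ t s) f.
Proof. unfold seq_; rewrite bind_assoc; reflexivity. Qed.
Lemma seq_seq (T : Monad) A B C (t : T A) (s : T B) (r : T C) :
  seq_ t (seq_ s r) = seq_ (seq_ t s) r.
Proof. unfold seq_; rewrite bind_assoc; reflexivity. Qed.
Lemma maps_to_true (T : Monad) (F : Frame) (g : T bool -> F) (s : T bool) :
  maps_to g s true = g s.
Proof.
  unfold maps_to. f_equal.
  replace (fun a' => ret (delta true a')) with (@ret T bool). apply bind_ret_r.
  apply functional_extensionality; intros [|]; [rewrite delta_eq|rewrite delta_neq]; auto; discriminate.
Qed.
Section Presented.
Variables (T : Monad) (L : Frame) (gen : T bool -> L) (P : presents_LB0 gen).

Lemma rels : LB0_relations gen.
Proof. exact (proj1 P). Qed.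

Lemma gen_top : gen (ret true) = ftop.
Proof.
  destruct rels as [R1 [R2 R3]]. pose proof (R2 _ (ret true) true) as H.
  unfold maps_to, seq_ in H. rewrite !bind_ret_l, delta_eq in H. exact H.
Qed.
Lemma gen_bot : gen (ret false) = fbot L.
Proof.
  destruct rels as [R1 [R2 R3]].
  assert (Hne : true <> false) by discriminate.
  pose proof (R1 _ (ret true) true false Hne) as H.
  unfold maps_to in H. rewrite !bind_ret_l, delta_eq, delta_neq in H by auto.
  rewrite gen_top, meet_top_l in H. exact H.
Qed.

Lemma seq_rels {A} (t : T A) : LB0_relations (fun b => gen (seq_ t b)).
Proof.
  destruct rels as [R1 [R2 R3]]. unfold LB0_relations, maps_to in *. split; [|split].
  - intros B s a a' Hne. rewrite !seq_bind. apply R1; auto.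
  - intros B s a. rewrite seq_bind, seq_seq. apply R2.
  - intros B C s u b. rewrite !seq_bind. rewrite R3. apply fjoin_ext. intros y; split;
      intros [a ->]; exists a; rewrite ?seq_bind, ?seq_seq; reflexivity.
Qed.

Definition kseq {A} (t : T A) : FrameHom L L :=
  proj1_sig (constructive_indefinite_description _ (proj1 (proj2 P L _ (@seq_rels A t)))).
Lemma kseq_gen {A} (t : T A) b : kseq t (gen b) = gen (seq_ t b).
Proof. exact (proj2_sig (constructive_indefinite_description _ (proj1 (proj2 P L _ (@seq_rels A t)))) b). Qed.

Lemma R2true {A} (t : T A) : maps_to gen (seq_ t (ret true)) true = ftop.
Proof.
  destruct rels as [R1 [R2 R3]]. pose proof (R2 _ (seq_ t (ret true)) true) as H.
  rewrite <- seq_seq in H. unfold seq_ at 2 in H. rewrite bind_ret_l in H. exact H.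
Qed.

Lemma cover {A} (t : T A) : fjoin (fun y => exists a, y = maps_to gen t a) = ftop.
Proof.
  destruct rels as [R1 [R2 R3]].
  pose proof (R3 _ _ t (fun _ => ret true) true) as H.
  assert (E : maps_to gen (bind t (fun _ => ret true)) true = ftop) by exact (R2true t).
  rewrite <- E, H. apply fjoin_ext. intros y; split; intros [a ->]; exists a; cbv beta;
  rewrite (R2true t), meet_top_r; reflexivity.
Qed.

Lemma Xdisj {A} (t : T A) a b : a <> b -> fmeet (maps_to gen t a) (maps_to gen t b) = fbot L.
Proof. destruct rels as [R1 _]; auto. Qed.

Definition semf {A} (t : T A) (f : A -> L) : L :=
  fjoin (fun y => exists a, y = fmeet (maps_to gen t a) (kseq t (f a))).

Lemma sem_top {A} (t : T A) : semf t (fun _ => ftop) = ftop.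
Proof.
  transitivity (fjoin (fun y => exists a, y = maps_to gen t a)); [|apply cover].
  unfold semf. apply fjoin_ext. intros y; split; intros [a ->]; exists a;
  rewrite ?fh_top, ?meet_top_r; reflexivity.
Qed.
Lemma sem_meet {A} (t : T A) (f g : A -> L) :
  semf t (fun a => fmeet (f a) (g a)) = fmeet (semf t f) (semf t g).
Proof.
  unfold semf. rewrite disj_meet by (apply Xdisj). apply fjoin_ext.
  intros y; split; intros [a ->]; exists a; rewrite ?fh_meet; reflexivity.
Qed.
Lemma sem_join {A} (t : T A) (S : (A -> L) -> Prop) :
  semf t (fun a => fjoin (fun y => exists f, S f /\ y = f a)) =
  fjoin (fun y => exists f, S f /\ y = semf t f).
Proof.
  unfold semf. apply fle_antisym.
  - apply fjoin_lub. intros y [a ->]. rewrite fh_join. apply meet_join_le.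
    intros s [x [[f [Hf ->]] ->]].
    apply le_join with (fjoin (fun y => exists a, y = fmeet (maps_to gen t a) (kseq t (f a)))).
    eauto. apply fjoin_ub; eauto.
  - apply fjoin_lub. intros y [f [Hf ->]]. apply fjoin_lub. intros y [a ->].
    apply le_join with (fmeet (maps_to gen t a) (kseq t (fjoin (fun y => exists f, S f /\ y = f a)))).
    eauto. apply meet_mono. apply fle_refl. apply fh_mono. apply fjoin_ub; eauto.
Qed.

Definition sem {A} (t : T A) : LocMap L (copow A L) :=
  {| fh := (semf t : copow A L -> L); fh_top := sem_top t; fh_meet := sem_meet t;
     fh_join := sem_join t |}.

Lemma sem_pt {A} (t : T A) a0 t0 :
  semf t (pt a0 (gen t0)) = fmeet (maps_to gen t a0) (gen (seq_ t t0)).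
Proof.
  unfold semf. apply fle_antisym.
  - apply fjoin_lub. intros y [a ->]. destruct (classic (a = a0)) as [->|Hne].
    + rewrite pt_eq, kseq_gen. apply fle_refl.
    + rewrite pt_neq, fh_bot, meet_bot_r by auto. apply bot_le.
  - apply fjoin_ub. exists a0. rewrite pt_eq, kseq_gen. reflexivity.
Qed.

Lemma pt_meet A (x y : L) (a0 : A) :
  pt a0 (fmeet x y) = @fmeet (copow A L) (pt a0 x) (pt a0 y).
Proof.
  apply copow_ext; intros a. simpl. destruct (classic (a = a0)) as [->|Hne].
  rewrite !pt_eq; auto. rewrite !pt_neq, meet_bot_r; auto.
Qed.
Lemma pt_join A (S : L -> Prop) (a0 : A) :
  pt a0 (fjoin S) = @fjoin (copow A L) (fun y => exists x, S x /\ y = pt a0 x).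
Proof.
  apply copow_ext; intros a. simpl. destruct (classic (a = a0)) as [->|Hne].
  - rewrite pt_eq. apply fjoin_ext. intros y; split.
    + intros Hy. exists (pt a0 y). split. eauto. rewrite pt_eq; auto.
    + intros [g [[x [Hx ->]] ->]]. rewrite pt_eq; auto.
  - rewrite pt_neq by auto. apply fle_antisym. apply bot_le.
    apply fjoin_lub. intros y [g [[x [Hx ->]] ->]]. rewrite pt_neq by auto. apply fle_refl.
Qed.

Lemma hom_pt_unique (W : Frame) A (m m' : FrameHom (copow A L) W) (a0 : A) :
  (forall t0, m (pt a0 (gen t0)) = m' (pt a0 (gen t0))) ->
  forall x, m (pt a0 x) = m' (pt a0 x).
Proof.
  intros H.
  set (c := m (pt a0 ftop)).
  assert (Hc : m' (pt a0 ftop) = c) by (unfold c; rewrite <- gen_top; symmetry; auto).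
  assert (Hm : forall (mm : FrameHom (copow A L) W) x y,
             mm (pt a0 (fmeet x y)) = fmeet (mm (pt a0 x)) (mm (pt a0 y))).
  { intros; rewrite pt_meet; apply fh_meet. }
  assert (Hj : forall (mm : FrameHom (copow A L) W) S,
             mm (pt a0 (fjoin S)) = fjoin (fun y => exists x, S x /\ y = mm (pt a0 x))).
  { intros; rewrite pt_join, fh_join. apply fjoin_ext; intros y; split.
    - intros [g [[x [Hx ->]] ->]]; eauto.
    - intros [x [Hx ->]]; eauto. }
  set (h := @down_hom W c L (fun x => m (pt a0 x)) eq_refl (Hm m) (Hj m)).
  set (h' := @down_hom W c L (fun x => m' (pt a0 x)) Hc (Hm m') (Hj m')).
  assert (Hr := hom_rel h rels).
  destruct (proj2 P _ _ Hr) as [_ Hu].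
  intros x. assert (E := Hu h h' (fun b => eq_refl) ).
  assert (E' : forall b, h' (gen b) = h (gen b)).
  { intros b; apply dsig_eq; simpl; symmetry; auto. }
  specialize (E E' x). apply (f_equal (@proj1_sig _ _)) in E. exact E.
Qed.

Lemma copow_unique (W : Frame) A (m m' : FrameHom (copow A L) W) :
  (forall a0 t0, m (pt a0 (gen t0)) = m' (pt a0 (gen t0))) -> fh_eq m m'.
Proof.
  intros H f. rewrite (copow_decomp f), !fh_join. apply fjoin_ext. intros y; split;
  intros [g [[a ->] ->]]; exists (pt a (f a)); split; eauto;
  [|symmetry]; apply hom_pt_unique; auto.
Qed.


Lemma sem_ret A (a : A) : loc_eq (sem (ret a)) (upsilon L a).
Proof.
  apply copow_unique. intros a0 t0.
  change (semf (ret a) (pt a0 (gen t0)) = pt a0 (gen t0) a).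
  rewrite sem_pt. unfold maps_to, seq_. rewrite !bind_ret_l.
  destruct (classic (a = a0)) as [->|Hne].
  - rewrite delta_eq, gen_top, meet_top_l, pt_eq; reflexivity.
  - rewrite delta_neq, gen_bot, meet_bot_l, pt_neq by auto; reflexivity.
Qed.

Lemma seq_bind_l A B C (t : T A) (u : A -> T B) (s : T C) :
  seq_ (bind t u) s = bind t (fun a => seq_ (u a) s).
Proof. unfold seq_; rewrite bind_assoc; reflexivity. Qed.

Lemma sem_bind A B (t : T A) (u : A -> T B) :
  loc_eq (sem (bind t u)) (loc_comp (copair (fun a => sem (u a))) (sem t)).
Proof.
  apply copow_unique. intros b0 t0.
  change (semf (bind t u) (pt b0 (gen t0)) = semf t (fun a => semf (u a) (pt b0 (gen t0)))).
  replace (fun a => semf (u a) (pt b0 (gen t0))) with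
    (fun a => fmeet (maps_to gen (u a) b0) (gen (seq_ (u a) t0)))
    by (apply functional_extensionality; intros; rewrite sem_pt; reflexivity).
  rewrite sem_pt. destruct rels as [R1 [R2 R3]].
  rewrite <- (@maps_to_true T L gen (seq_ (bind t u) t0)), seq_bind_l, !R3.
  rewrite disj_meet by (apply Xdisj). unfold semf. apply fjoin_ext.
  intros y; split; intros [a ->]; exists a; cbv beta;
    rewrite maps_to_true, fh_meet; unfold maps_to; rewrite !kseq_gen, ?seq_bind; reflexivity.
Qed.

Lemma gen_as_sem (b : T bool) : semf b (pt true (gen (ret true))) = gen b.
Proof.
  rewrite sem_pt, maps_to_true.
  rewrite <- (@maps_to_true T L gen (seq_ b (ret true))), R2true, meet_top_r. reflexivity.
Qed.

Section Term.
Variables (W : Frame) (semW : ComodelStr T W) (Hc : is_comodel semW).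
Lemma semW_ret A (a : A) (f : copow A W) : semW A (ret a) f = f a.
Proof. exact (proj1 Hc A a f). Qed.
Lemma semW_bind A B (t : T A) (u : A -> T B) (f : copow B W) :
  semW B (bind t u) f = semW A t (fun a => semW B (u a) f).
Proof. exact (proj2 Hc A B t u f). Qed.

Definition gW (b : T bool) : W := semW bool b (pt true ftop).
Lemma mt_W A (t : T A) a : maps_to gW t a = semW A t (pt a ftop).
Proof.
  unfold maps_to, gW. rewrite semW_bind. f_equal. apply functional_extensionality; intros a'.
  rewrite semW_ret. unfold pt. apply fjoin_ext. intros x. rewrite delta_true_iff. tauto.
Qed.

Lemma gW_rels : LB0_relations gW.
Proof.
  split; [|split].
  - intros A t a a' Hne. rewrite !mt_W, <- fh_meet.
    replace (@fmeet (copow A W) (pt a ftop) (pt a' ftop)) with (fbot (copow A W)).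
    apply fh_bot.
    rewrite copow_bot. apply copow_ext; intros x. cbn -[pt].
    destruct (classic (x = a)) as [->|Hx].
    + rewrite (@pt_neq _ _ a' a ftop) by congruence. rewrite meet_bot_r; reflexivity.
    + rewrite (@pt_neq _ _ a x ftop) by congruence. rewrite meet_bot_l; reflexivity.
  - intros A t a. rewrite mt_W. unfold seq_. rewrite semW_bind, semW_ret, pt_eq.
    apply (fh_top (semW A t)).
  - intros A B t u b. rewrite (mt_W (bind t u) b), semW_bind.
    transitivity (semW A t (@fjoin (copow A W) (fun f => exists a,
        f = @fmeet (copow A W) (pt a ftop) (fun _ => semW B (u a) (pt b ftop))))).
    + f_equal. apply copow_ext; intros a'. cbn -[pt]. apply fle_antisym.
      * eapply le_join. exists (@fmeet (copow A W) (pt a' ftop) (fun _ => semW B (u a') (pt b ftop))).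
        split; [exists a'; reflexivity|reflexivity]. cbn -[pt]. rewrite pt_eq, meet_top_l. apply fle_refl.
      * apply fjoin_lub. intros y [g [[a ->] ->]]. cbn -[pt].
        destruct (classic (a' = a)) as [->|Hne].
        rewrite pt_eq, meet_top_l; apply fle_refl.
        rewrite pt_neq, meet_bot_l by auto; apply bot_le.
    + rewrite fh_join. apply fjoin_ext. intros y; split.
      * intros [x [[a ->] ->]]. exists a. rewrite fh_meet, !mt_W. unfold seq_; rewrite semW_bind.
        reflexivity.
      * intros [a ->]. eexists; split; [exists a; reflexivity|].
        rewrite fh_meet, !mt_W. unfold seq_; rewrite semW_bind. reflexivity.
Qed.

Lemma comodel_map_of (h : FrameHom L W) : (forall b, h (gen b) = gW b) ->
  is_comodel_map semW (fun A t => sem t) h.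
Proof.
  intros Hh A t. apply copow_unique. intros a0 t0.
  change (h (semf t (pt a0 (gen t0))) = semW A t (fun a => h (pt a0 (gen t0) a))).
  rewrite sem_pt, fh_meet. unfold maps_to. rewrite !Hh.
  change (gW (bind t (fun a' => ret (delta a0 a')))) with (maps_to gW t a0).
  rewrite mt_W.
  assert (E : gW (seq_ t t0) = semW A t (fun _ => gW t0))
    by (unfold gW at 1; unfold seq_; rewrite semW_bind; reflexivity).
  rewrite E, <- fh_meet. f_equal. apply copow_ext; intros a. cbn -[pt].
  rewrite fh_pt, Hh. destruct (classic (a = a0)) as [->|Hne].
  - rewrite !pt_eq, meet_top_l; reflexivity.
  - rewrite !pt_neq, meet_bot_l by auto; reflexivity.
Qed.

Lemma comodel_map_unique (h h' : FrameHom L W) :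
  is_comodel_map semW (fun A t => sem t) h -> is_comodel_map semW (fun A t => sem t) h' -> fh_eq h h'.
Proof.
  intros Hh Hh'.
  destruct (proj2 P W (fun b => h (gen b)) (hom_rel h rels)) as [_ Hu].
  apply Hu; [intros; reflexivity|]. intros b. cbv beta.
  rewrite <- gen_as_sem.
  set (X := pt true (gen (ret true)) : copow bool L).
  etransitivity; [exact (Hh' bool b X)|]. symmetry.
  etransitivity; [exact (Hh bool b X)|].
  change (semW bool b (fun a => h (X a)) = semW bool b (fun a => h' (X a))).
  f_equal. apply functional_extensionality; intros a. unfold X.
  rewrite !fh_pt, gen_top, !fh_top. reflexivity.
Qed.
End Term.

Lemma sem_terminal : terminal_comodel (fun A t => sem t).
Proof.
  intros W semW Hc. split.
  - destruct (proj1 (proj2 P W _ (gW_rels Hc))) as [h Hh].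
    exists h. apply comodel_map_of; auto.
  - apply comodel_map_unique; auto.
Qed.

End Presented.
Section Construct.
Variable T : Monad.
Definition mt {A} (t : T A) (a : A) : T bool := bind t (fun a' => ret (delta a a')).

Definition cAx (F0 : list (T bool)) (Q : list (T bool) -> Prop) : Prop :=
  (exists A (t : T A) a a', a <> a' /\ F0 = [mt t a; mt t a'] /\ forall m, ~ Q m) \/
  (exists A (t : T A) (a : A), F0 = [] /\ forall m, Q m <-> m = [mt (seq_ t (ret a)) a]) \/
  (exists A B (t : T A) (u : A -> T B) b, F0 = [mt (bind t u) b] /\
      forall m, Q m <-> exists a, m = [mt t a; mt (seq_ t (u a)) b]) \/
  (exists A B (t : T A) (u : A -> T B) b a, F0 = [mt t a; mt (seq_ t (u a)) b] /\
      forall m, Q m <-> m = [mt (bind t u) b]).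

Definition lle (l l' : list (T bool)) := forall x, In x l' -> In x l.
Definition downset (D : list (T bool) -> Prop) := forall l l', lle l l' -> D l' -> D l.
Definition closedC (D : list (T bool) -> Prop) :=
  forall F0 Q, cAx F0 Q -> forall l, (forall m, Q m -> D (l ++ m)) -> D (l ++ F0).
Definition Cid D := downset D /\ closedC D.
Definition cJ (U : list (T bool) -> Prop) (l : list (T bool)) : Prop :=
  forall D, Cid D -> (forall m, U m -> D m) -> D l.

Lemma J_Cid U : Cid (cJ U).
Proof.
  split.
  - intros l l' H HJ D HD HU. apply (proj1 HD) with l'; auto. apply HJ; auto.
  - intros F0 Q HA l H D HD HU. apply (proj2 HD) with Q; auto. intros m Hm. apply H; auto.
Qed.
Lemma J_incl U l : U l -> cJ U l.
Proof. intros H D HD HU; auto. Qed.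
Lemma J_least U D : Cid D -> (forall m, U m -> D m) -> forall l, cJ U l -> D l.
Proof. intros HD HU l H; apply H; auto. Qed.
Lemma J_mono U V : (forall m, U m -> V m) -> forall l, cJ U l -> cJ V l.
Proof. intros H. apply J_least. apply J_Cid. intros; apply J_incl; auto. Qed.
Lemma J_sub U V : (forall m, U m -> cJ V m) -> forall l, cJ U l -> cJ V l.
Proof. intros H. apply J_least. apply J_Cid. auto. Qed.
Lemma lle_app_l l m : lle (l ++ m) l.
Proof. intros x Hx; apply in_or_app; auto. Qed.
Lemma lle_app_r l m : lle (l ++ m) m.
Proof. intros x Hx; apply in_or_app; auto. Qed.
Lemma lle_self l F0 : (forall x, In x F0 -> In x l) -> lle l (l ++ F0).
Proof. intros H x Hx; apply in_app_or in Hx; destruct Hx; auto. Qed.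

Lemma J_meet U a : downset U -> downset a -> forall l, cJ U l -> a l -> cJ (fun m => U m /\ a m) l.
Proof.
  intros HU Ha l HJ Hal.
  set (E := fun l => forall m, a m -> cJ (fun m => U m /\ a m) (m ++ l)).
  assert (HE : Cid E).
  { split.
    - intros l1 l2 H12 H2 m Hm. apply (proj1 (J_Cid _)) with (m ++ l2); auto.
      intros x Hx; apply in_app_or in Hx; apply in_or_app; destruct Hx; [left|right; apply H12]; auto.
    - intros F0 Q HA l1 H m Hm. rewrite app_assoc. apply (proj2 (J_Cid _)) with Q; auto.
      intros m' Hm'. rewrite <- app_assoc. apply H; auto. }
  assert (HUE : forall m, U m -> E m).
  { intros m Hm m' Hm'. apply J_incl. split.
    apply HU with m; auto using lle_app_r. apply Ha with m'; auto using lle_app_l. }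
  pose proof (J_least HE HUE HJ) as H. specialize (H l Hal).
  apply (proj1 (J_Cid _)) with (l ++ l); auto. apply lle_self; auto.
Qed.
Lemma J2 U V : downset U -> downset V -> forall l, cJ U l -> cJ V l -> cJ (fun m => U m /\ V m) l.
Proof.
  intros HU HV l H1 H2. pose proof (J_meet HU (proj1 (J_Cid V)) H1 H2) as H.
  revert H. apply J_sub. intros m [Hm HJm].
  pose proof (J_meet HV HU HJm Hm) as H. revert H. apply J_mono. intros k [? ?]; split; auto.
Qed.

Definition Lcar := {D : list (T bool) -> Prop | Cid D}.
Lemma Lsig_eq (x y : Lcar) : (forall l, proj1_sig x l <-> proj1_sig y l) -> x = y.
Proof.
  destruct x as [x Hx], y as [y Hy]; simpl; intros H.
  assert (x = y) by (apply functional_extensionality; intro l; apply propositional_extensionality; auto).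
  subst. f_equal; apply proof_irrelevance.
Qed.
Definition Lle (x y : Lcar) := forall l, proj1_sig x l -> proj1_sig y l.
Lemma top_Cid : Cid (fun _ => True).
Proof. split; intros; red; auto; intros; exact I. Qed.
Definition Ltop : Lcar := exist Cid (fun _ => True) top_Cid.
Lemma meet_Cid D E : Cid D -> Cid E -> Cid (fun l => D l /\ E l).
Proof.
  intros HD HE. split.
  - intros l l' H [H1 H2]; split; [apply (proj1 HD) with l'|apply (proj1 HE) with l']; auto.
  - intros F0 Q HA l H; split; [apply (proj2 HD) with Q | apply (proj2 HE) with Q]; auto;
    intros m Hm; apply H; auto.
Qed.
Definition Lmeet (x y : Lcar) : Lcar := exist Cid _ (meet_Cid (proj2_sig x) (proj2_sig y)).
Definition Lunion (S : Lcar -> Prop) l := exists x, S x /\ proj1_sig x l.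
Definition Ljoin (S : Lcar -> Prop) : Lcar := exist Cid (cJ (Lunion S)) (J_Cid _).
Lemma downset_union S : downset (Lunion S).
Proof. intros l l' H [x [Hx Hl']]; exists x; split; auto; apply (proj1 (proj2_sig x)) with l'; auto. Qed.

Definition LF : Frame.
Proof.
  refine {| fcar := Lcar; fle := Lle; ftop := Ltop; fmeet := Lmeet; fjoin := Ljoin |};
    unfold Lle.
  - auto.
  - auto.
  - intros x y H1 H2; apply Lsig_eq; split; auto.
  - intros; simpl; auto.
  - intros x y l [H _]; auto.
  - intros x y l [_ H]; auto.
  - intros x y z H1 H2 l H; split; auto.
  - intros S x Hx l H. apply J_incl. exists x; auto.
  - intros S y H l HJ. apply (J_least (U := Lunion S) (proj2_sig y)); auto.
    intros m [x [Hx Hm]]; apply (H x Hx); auto.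
  - intros a S. apply Lsig_eq. intros l. simpl. split.
    + intros [Ha HJ]. pose proof (J_meet (@downset_union S) (proj1 (proj2_sig a)) HJ Ha) as H.
      revert H. apply J_mono. intros m [[x [Hx Hxm]] Ham]. exists (Lmeet a x). split.
      exists x; auto. simpl; auto.
    + intros HJ. split.
      * apply (J_least (U := Lunion (fun y => exists x, S x /\ y = Lmeet a x)) (proj2_sig a)); auto.
        intros m [y [[x [Hx ->]] Hy]]. simpl in Hy. tauto.
      * revert HJ. apply J_mono. intros m [y [[x [Hx ->]] Hy]]. exists x. simpl in Hy; tauto.
Defined.

Lemma In_downset b : downset (fun l => In b l).
Proof. intros l l' H H'; auto. Qed.
Definition genL (b : T bool) : LF := exist Cid (cJ (fun l => In b l)) (J_Cid _).

Lemma genL_rels : LB0_relations genL.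
Proof.
  split; [|split].
  - intros A t a a' Hne. apply Lsig_eq. intros l. simpl. split.
    + intros [H1 H2]. pose proof (J2 (In_downset _) (In_downset _) H1 H2) as H. revert H.
      apply J_sub. intros m [Hx Hy].
      apply (proj1 (J_Cid _)) with (m ++ [mt t a; mt t a']).
      apply lle_self. intros x [<-|[<-|[]]]; auto.
      apply (proj2 (J_Cid _)) with (fun _ => False).
      left. exists A, t, a, a'. auto. intros m' [].
    + apply (J_least (meet_Cid (J_Cid _) (J_Cid _))). intros m [x0 [[] _]].
  - intros A t a. apply Lsig_eq. intros l. simpl. split; [auto|]. intros _ D HD HU.
    rewrite <- (app_nil_r l). apply (proj2 HD) with (fun m => m = [mt (seq_ t (ret a)) a]).
    right; left. exists A, t, a. split; [reflexivity|tauto].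
    intros m ->. apply HU. apply in_or_app; right; left; reflexivity.
  - intros A B t u b. apply Lsig_eq. intros l. simpl. split.
    + apply J_sub. intros m Hm.
      apply (proj1 (J_Cid _)) with (m ++ [mt (bind t u) b]).
      apply lle_self. intros x [<-|[]]; auto.
      apply (proj2 (J_Cid _)) with (fun m => exists a, m = [mt t a; mt (seq_ t (u a)) b]).
      right; right; left. exists A, B, t, u, b. split; [reflexivity|tauto].
      intros m' [a ->]. apply J_incl.
      exists (fmeet (genL (mt t a)) (genL (mt (seq_ t (u a)) b))). split. exists a; reflexivity.
      simpl. split; apply J_incl; apply in_or_app; right; simpl; auto.
    + apply J_sub. intros m [y [[a ->] Hy]]. simpl in Hy. destruct Hy as [H1 H2].
      pose proof (J2 (In_downset _) (In_downset _) H1 H2) as H. revert H.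
      apply J_sub. intros k [Hk1 Hk2].
      apply (proj1 (J_Cid _)) with (k ++ [mt t a; mt (seq_ t (u a)) b]).
      apply lle_self. intros x [<-|[<-|[]]]; auto.
      apply (proj2 (J_Cid _)) with (fun m => m = [mt (bind t u) b]).
      right; right; right. exists A, B, t, u, b, a. split; [reflexivity|tauto].
      intros m' ->. apply J_incl. apply in_or_app; right; left; reflexivity.
Qed.

Definition gm {F : Frame} (g : T bool -> F) (l : list (T bool)) : F :=
  fold_right (fun b acc => fmeet (g b) acc) ftop l.

Section Univ.
Variables (F : Frame) (g : T bool -> F) (Hg : LB0_relations g).

Lemma gm_app l l' : gm g (l ++ l') = fmeet (gm g l) (gm g l').
Proof. induction l; simpl. rewrite meet_top_l; reflexivity. rewrite IHl, meet_assoc; reflexivity. Qed.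
Lemma gm_In b l : In b l -> fle (gm g l) (g b).
Proof.
  induction l; simpl; [contradiction|]. intros [->|H]; [apply fmeet_lb1|apply meet_le_r; auto].
Qed.
Lemma gm_lle l l' : lle l l' -> fle (gm g l) (gm g l').
Proof.
  induction l'; simpl; intros H; [apply ftop_max|]. apply fmeet_glb.
  apply gm_In, H; left; auto. apply IHl'; intros x Hx; apply H; right; auto.
Qed.
Lemma Ax_valid F0 Q : cAx F0 Q -> fle (gm g F0) (fjoin (fun y => exists m, Q m /\ y = gm g m)).
Proof.
  destruct Hg as [R1 [R2 R3]]. unfold maps_to in *.
  intros [[A [t [a [a' [Hne [-> HQ]]]]]]|[[A [t [a [-> HQ]]]]|[[A [B [t [u [b [-> HQ]]]]]]|
          [A [B [t [u [b [a [-> HQ]]]]]]]]]]; simpl; unfold mt.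
  - rewrite meet_top_r, R1 by auto. apply bot_le.
  - apply le_join with (gm g [mt (seq_ t (ret a)) a]).
    exists [mt (seq_ t (ret a)) a]; split; [apply HQ; reflexivity|reflexivity].
    simpl; unfold mt; rewrite R2, meet_top_r; apply fle_refl.
  - rewrite meet_top_r, R3. apply fjoin_lub. intros y [a0 ->].
    apply le_join with (gm g [mt t a0; mt (seq_ t (u a0)) b]).
    exists [mt t a0; mt (seq_ t (u a0)) b]; split; [apply HQ; eauto|reflexivity].
    simpl; unfold mt; rewrite meet_top_r; apply fle_refl.
  - apply le_join with (gm g [mt (bind t u) b]).
    exists [mt (bind t u) b]; split; [apply HQ; reflexivity|reflexivity].
    simpl; unfold mt; rewrite !meet_top_r, R3.
    apply le_join with (fmeet (g (bind t (fun a' => ret (delta a a'))))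
                              (g (bind (seq_ t (u a)) (fun a' => ret (delta b a'))))).
    exists a; reflexivity. apply fle_refl.
Qed.

Definition hcF (D : LF) : F := fjoin (fun y => exists l, proj1_sig D l /\ y = gm g l).

Lemma key U : fle (fjoin (fun y => exists l, cJ U l /\ y = gm g l))
                  (fjoin (fun y => exists l, U l /\ y = gm g l)).
Proof.
  set (c := fjoin (fun y => exists l, U l /\ y = gm g l)).
  assert (HD : Cid (fun l => fle (gm g l) c)).
  { split.
    - intros l l' H H'. eapply fle_trans; [apply gm_lle; eauto|auto].
    - intros F0 Q HA l H. rewrite gm_app. eapply fle_trans.
      apply meet_mono. apply fle_refl. apply (Ax_valid HA).
      apply meet_join_le. intros s [m [Hm ->]]. rewrite <- gm_app. auto. }
  apply fjoin_lub. intros y [l [Hl ->]]. apply (J_least (U := U) HD); auto.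
  intros m Hm. apply fjoin_ub; eauto.
Qed.

Lemma hcF_top : hcF ftop = ftop.
Proof.
  apply fle_antisym. apply ftop_max. apply le_join with (gm g []).
  exists []; split; [exact I|reflexivity]. apply fle_refl.
Qed.
Lemma hcF_meet x y : hcF (fmeet x y) = fmeet (hcF x) (hcF y).
Proof.
  apply fle_antisym.
  - apply fmeet_glb; apply fjoin_lub; intros z [l [[Hx Hy] ->]]; apply le_join with (gm g l);
      eauto using fle_refl.
  - unfold hcF at 3. apply meet_join_le. intros s [l [Hl ->]]. apply join_meet_le.
    intros s [l' [Hl' ->]]. rewrite <- gm_app. apply le_join with (gm g (l' ++ l)); [|apply fle_refl].
    exists (l' ++ l); split; [|reflexivity]. simpl. split.
    apply (proj1 (proj2_sig x)) with l'; auto using lle_app_l.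
    apply (proj1 (proj2_sig y)) with l; auto using lle_app_r.
Qed.
Lemma hcF_join S : hcF (fjoin S) = fjoin (fun y => exists x, S x /\ y = hcF x).
Proof.
  apply fle_antisym.
  - eapply fle_trans; [apply key|]. apply fjoin_lub. intros y [l [[x [Hx Hl]] ->]].
    apply le_join with (hcF x); [eauto|]. apply le_join with (gm g l); [eauto|apply fle_refl].
  - apply fjoin_lub. intros y [x [Hx ->]]. apply fjoin_lub. intros y [l [Hl ->]].
    apply le_join with (gm g l); [|apply fle_refl]. exists l; split; [|reflexivity].
    apply J_incl. exists x; auto.
Qed.
Definition hcH : FrameHom LF F :=
  {| fh := hcF; fh_top := hcF_top; fh_meet := hcF_meet; fh_join := hcF_join |}.
Lemma hcH_gen b : hcH (genL b) = g b.
Proof.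
  apply fle_antisym.
  - eapply fle_trans; [apply key|]. apply fjoin_lub. intros y [l [Hl ->]]. apply gm_In; auto.
  - apply le_join with (gm g [b]). exists [b]; split; [apply J_incl; left; auto|reflexivity].
    simpl; rewrite meet_top_r; apply fle_refl.
Qed.
End Univ.

Lemma lle_downset l : downset (fun k => lle k l).
Proof. intros k k' H H' x Hx; auto. Qed.
Lemma gmL_self l : forall l', lle l' l -> proj1_sig (gm genL l) l'.
Proof.
  induction l; simpl; intros l' H. exact I. split.
  apply J_incl; apply H; left; auto. apply IHl; intros x Hx; apply H; right; auto.
Qed.
Lemma gmL_sub l : forall m, proj1_sig (gm genL l) m -> cJ (fun k => lle k l) m.
Proof.
  induction l; simpl; intros m H. apply J_incl; intros x []. destruct H as [H1 H2].
  pose proof (J2 (@In_downset a) (@lle_downset l) H1 (IHl m H2)) as H. revert H.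
  apply J_mono. intros k [Hk1 Hk2] x [->|Hx]; auto.
Qed.
Lemma decompL (D : LF) : D = fjoin (fun y => exists l, proj1_sig D l /\ y = gm genL l).
Proof.
  apply Lsig_eq. intros l0. simpl. split.
  - intros H. apply J_incl. exists (gm genL l0). split. eauto. apply gmL_self. intros x; auto.
  - apply (J_least (proj2_sig D)). intros m [y [[l [Hl ->]] Hy]].
    pose proof (gmL_sub _ Hy) as H. revert H. apply (J_least (proj2_sig D)).
    intros k Hk; apply (proj1 (proj2_sig D)) with l; auto.
Qed.
Lemma fh_gm (F : Frame) (g : T bool -> F) (h : FrameHom LF F) : (forall b, h (genL b) = g b) ->
  forall l, h (gm genL l) = gm g l.
Proof. intros Hb l; induction l; simpl. apply fh_top. rewrite fh_meet, Hb, IHl; reflexivity. Qed.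

Lemma LF_presents : presents_LB0 genL.
Proof.
  split. apply genL_rels. intros F g Hg. split.
  - exists (hcH Hg). intros b. apply hcH_gen.
  - intros h h' Hh Hh' D. rewrite (decompL D), !fh_join. apply fjoin_ext. intros y; split;
      intros [x [[l [Hl ->]] ->]]; exists (gm genL l); split; eauto;
      rewrite (fh_gm g h Hh), (fh_gm g h' Hh'); reflexivity.
Qed.
End Construct.

Theorem proposition3p3 (T : Monad) (HT : ranked T) :
  (exists (L : Frame) (gen : T bool -> L), presents_LB0 gen) /\
  forall (L : Frame) (gen : T bool -> L), presents_LB0 gen ->
    exists sem : ComodelStr T L,
      (forall (A : Type) (t : T A) (a0 : A) (t0 : T bool),
          loc_inv (sem A t) (pt a0 (gen t0)) =
          fmeet (maps_to gen t a0) (gen (seq_ t t0))) /\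
      (forall (A : Type) (t : T A) (m : LocMap L (copow A L)),
          (forall (a0 : A) (t0 : T bool),
              loc_inv m (pt a0 (gen t0)) =
              fmeet (maps_to gen t a0) (gen (seq_ t t0))) ->
          loc_eq m (sem A t)) /\
      is_comodel sem /\
      terminal_comodel sem.
Proof.
  split.
  - exists (LF T), (@genL T). apply LF_presents.
  - intros L gen P. exists (fun A t => @sem T L gen P A t). split; [|split; [|split]].
    + intros A t a0 t0. apply (sem_pt P).
    + intros A t m Hm. apply (copow_unique P). intros a0 t0. unfold loc_inv in Hm. rewrite Hm.
      symmetry. apply (sem_pt P).
    + split. intros A a; apply (sem_ret P). intros A B t u; apply (sem_bind P).
    + apply (sem_terminal P).
Qed.
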